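(* Consider a standard Nash equilibrium problem (NEP) with $N$ players in which player $\nu$ solves $\min_{x^\nu}\theta_\nu(x)$ subject to $c^\nu(x^\nu)\le 0$, where $\theta_\nu:\mathbb{R}^n\to\mathbb{R}$ and $c^\nu:\mathbb{R}^{n_\nu}\to\mathbb{R}^{r_\nu}$ are continuously differentiable (so each constraint function $c^\nu$ depends only on player $\nu$'s own variables). Let $c=(c^1,\ldots,c^N):\mathbb{R}^n\to\mathbb{R}^r$ be the concatenated constraint map and let $\bar x\in\mathbb{R}^n$. Then: (a) If $\bar x$ is feasible (i.e. $c(\bar x)\le 0$), then GNEP-CPLD holds in $\bar x$ if and only if $c$ satisfies (classical) CPLD in $\bar x$. (b) GNEP-EMFCQ holds in $\bar x$ if and only if $c$ satisfies (classical) EMFCQ in $\bar x$.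
   Context: Variables: $x=(x^1,\ldots,x^N)\in\mathbb{R}^n$ with $x^\nu\in\mathbb{R}^{n_\nu}$, $n=n_1+\cdots+n_N$, $r=r_1+\cdots+r_N$; one writes $x=(x^\nu,x^{-\nu})$. For a differentiable $f$, $\nabla f$ denotes the transposed Jacobian and $\nabla_{x^\nu} f$ the submatrix corresponding to the components $x^\nu$. Vectors $v_1,\dots,v_k$ are positively linearly dependent if $\sum_i\lambda_i v_i=0$ has a nontrivial solution with all $\lambda_i\ge 0$. CPLD$_\nu$ at a point $x$ with $c^\nu(x)\le0$: whenever the partial gradients $\nabla_{x^\nu}c_i^\nu(x)$, $i\in I$, are positively linearly dependent for some $I\subset\{i: c_i^\nu(x)=0\}$, the partial gradients $\nabla_{x^\nu}c_i^\nu(y)$, $i\in I$, are linearly dependent for all $y$ in a neighbourhood of $x$. GNEP-CPLD holds at $x$ if CPLD$_\nu$ holds at $x$ for every $\nu$. EMFCQ$_\nu$ at a point $x$ (not necessarily feasible): there is $d^\nu\in\mathbb{R}^{n_\nu}$ with $\nabla_{x^\nu}c_i^\nu(x)^Td^\nu<0$ for every $i$ with $c_i^\nu(x)\ge0$. GNEP-EMFCQ holds at $x$ if EMFCQ$_\nu$ holds at $x$ for every $\nu$. Classical CPLD for $c$ at a feasible $x$: whenever $\nabla c_i(x)$, $i\in I$, are positively linearly dependent for some subset $I$ of active indices $\{i:c_i(x)=0\}$, the full gradients $\nabla c_i(y)$, $i\in I$, are linearly dependent for all $y$ near $x$. Classical EMFCQ for $c$ at $x$: there is $d\in\mathbb{R}^n$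 with $\nabla c_i(x)^Td<0$ for every $i$ with $c_i(x)\ge 0$. *)

(* Defs.v *)
From HB Require Import structures.
From mathcomp Require Import all_boot all_order all_algebra.
From mathcomp Require Import all_classical all_reals all_analysis.
Set Implicit Arguments. Unset Strict Implicit. Unset Printing Implicit Defensive.
Import Order.TTheory GRing.Theory Num.Theory.
Import numFieldNormedType.Exports.
Local Open Scope ring_scope.

Section Defs.
Variable R : realType.

Definition unitv (m : nat) (j : 'I_m) : 'rV[R]_m := delta_mx 0 j.

Definition grad (m : nat) (f : 'rV[R]_m -> R) (x : 'rV[R]_m) : 'rV[R]_m :=
  \row_j ('D_(unitv j) f x).

Definition C1 (m : nat) (f : 'rV[R]_m -> R) : Prop :=
  (forall x, differentiable f x) /\
  (forall j : 'I_m, continuous (fun x => 'D_(unitv j) f x)).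

Definition C1v (m k : nat) (g : 'rV[R]_m -> 'rV[R]_k) : Prop :=
  forall i : 'I_k, C1 (fun x => g x 0 i).

Definition dotv (m : nat) (u v : 'rV[R]_m) : R := \sum_(j < m) u 0 j * v 0 j.

Definition pos_lin_dep (k m : nat) (I : {set 'I_k}) (v : 'I_k -> 'rV[R]_m) : Prop :=
  exists lam : 'I_k -> R,
    (forall i, i \in I -> 0 <= lam i) /\
    (exists2 i, i \in I & lam i != 0) /\
    \sum_(i in I) lam i *: v i = 0.

Definition lin_dep (k m : nat) (I : {set 'I_k}) (v : 'I_k -> 'rV[R]_m) : Prop :=
  exists lam : 'I_k -> R,
    (exists2 i, i \in I & lam i != 0) /\
    \sum_(i in I) lam i *: v i = 0.

Variables (N : nat) (n r : 'I_N -> nat).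

Definition nvar := (\sum_(nu < N) n nu)%N.
Definition ncon := (\sum_(nu < N) r nu)%N.

Definition blk (x : 'rV[R]_nvar) (nu : 'I_N) : 'rV[R]_(n nu) := submxrow x nu.

Definition concat_c (c : forall nu, 'rV[R]_(n nu) -> 'rV[R]_(r nu))
  (x : 'rV[R]_nvar) : 'rV[R]_ncon := mxrow (fun nu => c nu (blk x nu)).

Definition CPLD_nu (c : forall nu, 'rV[R]_(n nu) -> 'rV[R]_(r nu))
  (nu : 'I_N) (x : 'rV[R]_nvar) : Prop :=
  forall I : {set 'I_(r nu)},
    (forall i, i \in I -> c nu (blk x nu) 0 i = 0) ->
    pos_lin_dep I (fun i => grad (fun z => c nu z 0 i) (blk x nu)) ->
    \forall y \near x, lin_dep I (fun i => grad (fun z => c nu z 0 i) (blk y nu)).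

Definition GNEP_CPLD c x : Prop := forall nu, CPLD_nu c nu x.

Definition EMFCQ_nu (c : forall nu, 'rV[R]_(n nu) -> 'rV[R]_(r nu))
  (nu : 'I_N) (x : 'rV[R]_nvar) : Prop :=
  exists d : 'rV[R]_(n nu), forall i : 'I_(r nu),
    0 <= c nu (blk x nu) 0 i ->
    dotv (grad (fun z => c nu z 0 i) (blk x nu)) d < 0.

Definition GNEP_EMFCQ c x : Prop := forall nu, EMFCQ_nu c nu x.

End Defs.

Definition feasible (R : realType) (m k : nat) (g : 'rV[R]_m -> 'rV[R]_k) (x : 'rV[R]_m) :=
  forall i : 'I_k, g x 0 i <= 0.

Definition CPLD (R : realType) (m k : nat) (g : 'rV[R]_m -> 'rV[R]_k) (x : 'rV[R]_m) : Prop :=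
  forall I : {set 'I_k},
    (forall i, i \in I -> g x 0 i = 0) ->
    pos_lin_dep I (fun i => grad (fun z => g z 0 i) x) ->
    \forall y \near x, lin_dep I (fun i => grad (fun z => g z 0 i) y).

Definition EMFCQ (R : realType) (m k : nat) (g : 'rV[R]_m -> 'rV[R]_k) (x : 'rV[R]_m) : Prop :=
  exists d : 'rV[R]_m, forall i : 'I_k,
    0 <= g x 0 i -> dotv (grad (fun z => g z 0 i) x) d < 0.

(* Main.v *)
Require Import Defs.
From HB Require Import structures.
From mathcomp Require Import all_boot all_order all_algebra.
From mathcomp Require Import all_classical all_reals all_analysis.
Import Order.TTheory GRing.Theory Num.Theory.
Import numFieldNormedType.Exports.
Local Open Scope ring_scope.
Import tagnat.

Section S.
Variables (R : realType) (N : nat) (n : 'I_N -> nat).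

Lemma Rank_inj nu : injective (@Rank N n nu).
Proof. by move=> a b /eqP; rewrite -val_eqE eq_Rank eqxx /= => /eqP/val_inj. Qed.

Lemma Rank_neq mu nu (a : 'I_(n mu)) (b : 'I_(n nu)) : mu != nu -> Rank mu a != Rank nu b.
Proof. by move=> h; rewrite -val_eqE eq_Rank (negbTE h). Qed.

Lemma Rank_surj k : exists nu (b : 'I_(n nu)), k = Rank nu b.
Proof. by exists (sig1 k), (sig2 k); rewrite sig2K. Qed.

Lemma Rank_sig1 nu k : sig1 k = nu -> exists b : 'I_(n nu), k = Rank nu b.
Proof. move=> E; have := sig2K k; move: (sig2 k); rewrite E => b <-; by exists b. Qed.

Lemma blkE (x : 'rV[R]_(nvar n)) nu a : blk x nu 0 a = x 0 (Rank nu a).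
Proof. by rewrite /blk /submxrow mxE. Qed.

Lemma blkE' (x : 'rV[R]_(nvar n)) nu a b : blk x nu a b = x 0 (Rank nu b).
Proof. by rewrite /blk /submxrow mxE [a]ord1. Qed.

Lemma blk_lin (h : R) (v x : 'rV[R]_(nvar n)) nu :
  blk (h *: v + x) nu = h *: blk v nu + blk x nu.
Proof. by apply/matrixP => i j; rewrite !mxE. Qed.

Lemma D_blk nu (g : 'rV[R]_(n nu) -> R) (v y : 'rV[R]_(nvar n)) :
  'D_v (fun z => g (blk z nu)) y = 'D_(blk v nu) g (blk y nu).
Proof.
rewrite /derive; do 3 f_equal; apply: funext => h /=.
by rewrite blk_lin.
Qed.

Lemma blk_unitv_eq nu (b : 'I_(n nu)) :
  blk (@unitv R _ (Rank nu b : 'I_(nvar n))) nu = @unitv R _ b.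
Proof.
apply/matrixP => i j; rewrite /blk /submxrow !mxE (inj_eq (@Rank_inj nu)).
by rewrite [i]ord1 eqxx.
Qed.

Lemma blk_unitv_neq mu nu (b : 'I_(n mu)) : mu != nu ->
  blk (@unitv R _ (Rank mu b : 'I_(nvar n))) nu = 0 :> 'rV[R]_(n nu).
Proof.
move=> h; apply/matrixP => i j; rewrite /blk /submxrow !mxE.
by rewrite eq_sym in h; rewrite (negbTE (Rank_neq _ _ j b h)) andbF.
Qed.

Lemma sum_split (V : nmodType) (I : {set 'I_(\sum_i n i)}) (F : 'I_(\sum_i n i) -> V) :
  \sum_(k in I) F k = \sum_nu \sum_(i in [set i | Rank nu i \in I]) F (Rank nu i).
Proof.
rewrite (partition_big (@sig1 _ n) xpredT) //=; apply: eq_bigr => nu _.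
rewrite -(big_imset _ (in2W (@Rank_inj nu))); apply: eq_bigl => k.
apply/andP/imsetP.
  by case=> kI /eqP /Rank_sig1 [b E]; subst k; exists b; rewrite ?inE.
by case=> b; rewrite inE => bI ->; rewrite Rank1K.
Qed.
End S.

Section T.
Variables (R : realType) (N : nat) (n r : 'I_N -> nat)
  (c : forall nu : 'I_N, 'rV[R]_(n nu) -> 'rV[R]_(r nu)).

Lemma concat_entry x nu (i : 'I_(r nu)) :
  concat_c c x 0 (Rank nu i) = c nu (blk x nu) 0 i.
Proof.
have := congr1 (fun A : 'M[R]_(1, r nu) => A 0 i) (mxrowK (fun nu => c nu (blk x nu)) nu).
by rewrite /submxrow mxE.
Qed.

Lemma concat_fun nu (i : 'I_(r nu)) :
  (fun z => concat_c c z 0 (Rank nu i)) = (fun z => c nu (blk z nu) 0 i).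
Proof. by apply: funext => z; rewrite concat_entry. Qed.

Lemma gradP1 nu (i : 'I_(r nu)) y :
  blk (grad (fun z => concat_c c z 0 (Rank nu i)) y) nu =
  grad (fun z => c nu z 0 i) (blk y nu).
Proof.
rewrite concat_fun; apply/matrixP => a b.
by rewrite blkE' /grad !mxE (@D_blk R N n nu (fun w => c nu w 0 i)) blk_unitv_eq.
Qed.

Lemma gradP2 nu (i : 'I_(r nu)) y mu : mu != nu ->
  blk (grad (fun z => concat_c c z 0 (Rank nu i)) y) mu = 0.
Proof.
move=> h; rewrite concat_fun; apply/matrixP => a b.
by rewrite blkE' /grad !mxE (@D_blk R N n nu (fun w => c nu w 0 i)) blk_unitv_neq // derive0.
Qed.
End T.

Section U.
Variables (R : realType) (N : nat) (n r : 'I_N -> nat)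
  (c : forall nu : 'I_N, 'rV[R]_(n nu) -> 'rV[R]_(r nu)).

Lemma blk_sum (J : finType) (P : pred J) (lam : J -> R) (v : J -> 'rV[R]_(nvar n)) nu :
  blk (\sum_(k | P k) lam k *: v k) nu = \sum_(k | P k) lam k *: blk (v k) nu.
Proof.
apply/matrixP => a b; rewrite blkE' !summxE; apply: eq_bigr => k _.
by rewrite [LHS]mxE [RHS]mxE blkE'.
Qed.

Lemma blk0 nu : blk (0 : 'rV[R]_(nvar n)) nu = 0.
Proof. by apply/matrixP => a b; rewrite blkE' !mxE. Qed.

Lemma vec0_blk (v : 'rV[R]_(nvar n)) : (forall nu, blk v nu = 0) -> v = 0.
Proof.
move=> h; rewrite -[v]submxrowK -(@mxrow0 R _ n 1).
by apply: eq_mxrow => nu; apply: h.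
Qed.

Lemma dotv_split (u v : 'rV[R]_(nvar n)) :
  dotv u v = \sum_nu dotv (blk u nu) (blk v nu).
Proof.
rewrite /dotv -big_set /= sum_split; apply: eq_bigr => nu _.
by apply: eq_big => [i|i _]; rewrite ?inE // !blkE'.
Qed.

Lemma dotv0l m (v : 'rV[R]_m) : dotv 0 v = 0.
Proof. by rewrite /dotv big1 // => i _; rewrite mxE mul0r. Qed.

Notation G y k := (grad (fun z => concat_c c z 0 k) y).
Notation g nu i w := (grad (fun z => c nu z 0 i) w).

Lemma dotv_G nu (i : 'I_(r nu)) y v :
  dotv (G y (Rank nu i)) v = dotv (g nu i (blk y nu)) (blk v nu).
Proof.
rewrite dotv_split (bigD1 nu) //= gradP1 big1 ?addr0 // => mu hmu.
by rewrite gradP2 // dotv0l.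
Qed.

Lemma blk_sumG (I : {set 'I_(ncon r)}) (lam : 'I_(ncon r) -> R) y mu :
  blk (\sum_(k in I) lam k *: G y k) mu =
  \sum_(i in [set i | Rank mu i \in I]) lam (Rank mu i) *: g mu i (blk y mu).
Proof.
rewrite blk_sum sum_split (bigD1 mu) //= [X in _ + X]big1 ?addr0.
  by apply: eq_bigr => i _; rewrite gradP1.
move=> nu hnu; rewrite big1 // => i _; rewrite gradP2 ?scaler0 //.
by rewrite eq_sym.
Qed.

Definition lamext nu (m : 'I_(r nu) -> R) (k : 'I_(ncon r)) : R :=
  \sum_(i | Rank nu i == k) m i.

Lemma lamextE nu m i : lamext nu m (Rank nu i) = m i.
Proof. by rewrite /lamext (big_pred1 i) // => j; rewrite /= (inj_eq (@Rank_inj _ _ nu)). Qed.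

Lemma lamext0 nu mu m (b : 'I_(r mu)) : mu != nu -> lamext nu m (Rank mu b) = 0.
Proof.
move=> h; rewrite /lamext; apply: big_pred0 => j /=.
by apply/negbTE; apply: Rank_neq; rewrite eq_sym.
Qed.
End U.

Theorem theorem2p5 (R : realType) (N : nat) (n r : 'I_N -> nat)
  (theta : 'I_N -> 'rV[R]_(nvar n) -> R)
  (c : forall nu : 'I_N, 'rV[R]_(n nu) -> 'rV[R]_(r nu))
  (Htheta : forall nu, C1 (theta nu))
  (Hc : forall nu, C1v (c nu))
  (xbar : 'rV[R]_(nvar n)) :
  (feasible (concat_c c) xbar ->
     (GNEP_CPLD c xbar <-> CPLD (concat_c c) xbar)) /\
  (GNEP_EMFCQ c xbar <-> EMFCQ (concat_c c) xbar).
Proof.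
split.
  move=> _; split.
  - move=> H I Iact [lam [lam0 [[k0 k0I nz] S]]].
    have [nu [i0 Ek0]] := @Rank_surj _ _ k0; subst k0.
    have Ha : forall i, i \in [set i | Rank nu i \in I] -> c nu (blk xbar nu) 0 i = 0.
      by move=> i; rewrite inE => /Iact; rewrite concat_entry.
    have Hp : pos_lin_dep [set i | Rank nu i \in I]
        (fun i => grad (fun z => c nu z 0 i) (blk xbar nu)).
      exists (fun i => lam (Rank nu i)); split.
        by move=> i; rewrite inE => /lam0.
      split; first by exists i0; rewrite ?inE.
      by rewrite -(@blk_sumG _ _ _ _ c) S blk0.
    apply: filterS (H nu _ Ha Hp).
    move=> y [m [[i1 i1I nzm] Hs]].
    exists (@lamext _ _ _ nu m); split.
      by exists (Rank nu i1); [rewrite inE in i1I | rewrite lamextE].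
    apply: vec0_blk => mu; rewrite blk_sumG.
    have [<-|hmu] := eqVneq nu mu.
      by rewrite -[RHS]Hs; apply: eq_bigr => i _; rewrite lamextE.
    by rewrite big1 // => i _; rewrite lamext0 ?scale0r // eq_sym.
  - move=> H nu I Iact [lam [lam0 [[i0 i0I nz] S]]].
    have EI : [set i | Rank nu i \in Rank nu @: I] = I.
      by apply/setP => i; rewrite inE mem_imset //; apply: Rank_inj.
    have Ha : forall k, k \in Rank nu @: I -> concat_c c xbar 0 k = 0.
      by move=> k /imsetP [i iI ->]; rewrite concat_entry Iact.
    have Hp : pos_lin_dep (Rank nu @: I)
        (fun k => grad (fun z => concat_c c z 0 k) xbar).
      exists (@lamext _ _ _ nu lam); split.
        by move=> k /imsetP [i iI ->]; rewrite lamextE lam0.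
      split; first by exists (Rank nu i0); rewrite ?lamextE ?imset_f.
      apply: vec0_blk => mu; rewrite blk_sumG.
      have [<-|hmu] := eqVneq nu mu.
        by rewrite EI -[RHS]S; apply: eq_bigr => i _; rewrite lamextE.
      by rewrite big1 // => i _; rewrite lamext0 ?scale0r // eq_sym.
    apply: filterS (H _ Ha Hp).
    move=> y [m [[k1 /imsetP [i1 i1I ->] nzm] Hs]].
    exists (fun i => m (Rank nu i)); split; first by exists i1.
    by have := congr1 (fun v => blk v nu) Hs; rewrite /= blk_sumG EI blk0.
split.
- move=> H.
  pose d := fun nu => projT1 (cid (H nu)).
  have Hd nu := projT2 (cid (H nu)).
  exists (mxrow (fun nu => d nu)) => k.
  have [nu [i ->]] := @Rank_surj _ _ k.
  rewrite concat_entry dotv_G /blk mxrowK => /Hd.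
  by [].
- move=> [d Hd] nu; exists (blk d nu) => i hi.
  by rewrite -dotv_G; apply: Hd; rewrite concat_entry.
Qed.
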